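(* For $a,b\in\mathbb{C}$ let $X_{a,b}\subset\mathbb{P}^1_x\times\mathbb{P}^1_y\times\mathbb{P}^1_z$ be the surface defined by \[F=Q_a(x_0,x_1,y_0,y_1)z_0^2+(x_0^2y_0^2+x_1^2y_1^2)z_0z_1+Q_b(x_0,x_1,y_0,y_1)z_1^2,\] where $Q_c=x_0^2y_1^2+c\,x_0x_1y_0y_1+x_1^2y_0^2$. Then $X_{a,b}$ is smooth if and only if \[(a^2-4)(b^2-4)(ab-2b-2a+3)(ab+2b+2a+3)(b^2-2ab+a^2+4)\neq0.\]
   Context: $(x_0:x_1),(y_0:y_1),(z_0:z_1)$ are homogeneous coordinates on $\mathbb{P}^1_x,\mathbb{P}^1_y,\mathbb{P}^1_z$. *)

(* Defs.v *)
From HB Require Import structures.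
From mathcomp Require Import all_boot all_order all_algebra.
From mathcomp Require Import mpoly.
From mathcomp Require Import complex.
From mathcomp Require Import Rstruct.
From Stdlib Require Import Reals.

Set Implicit Arguments.
Unset Strict Implicit.
Unset Printing Implicit Defensive.

Import Order.TTheory GRing.Theory Num.Theory.
Local Open Scope ring_scope.

Definition CC : Type := complex R.

Definition vx0 : {mpoly CC[6]} := 'X_(inord 0).
Definition vx1 : {mpoly CC[6]} := 'X_(inord 1).
Definition vy0 : {mpoly CC[6]} := 'X_(inord 2).
Definition vy1 : {mpoly CC[6]} := 'X_(inord 3).
Definition vz0 : {mpoly CC[6]} := 'X_(inord 4).
Definition vz1 : {mpoly CC[6]} := 'X_(inord 5).

Definition Qc (c : CC) : {mpoly CC[6]} :=
  vx0 ^+ 2 * vy1 ^+ 2 + c%:MP * vx0 * vx1 * vy0 * vy1 + vx1 ^+ 2 * vy0 ^+ 2.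

Definition Fab (a b : CC) : {mpoly CC[6]} :=
  Qc a * vz0 ^+ 2 + (vx0 ^+ 2 * vy0 ^+ 2 + vx1 ^+ 2 * vy1 ^+ 2) * vz0 * vz1
  + Qc b * vz1 ^+ 2.

(* A point of P^1_x x P^1_y x P^1_z, given by homogeneous coordinates
   v = (x0,x1,y0,y1,z0,z1) with (x0,x1), (y0,y1), (z0,z1) each nonzero. *)
Definition proj_point (v : 'I_6 -> CC) : Prop :=
  (v (inord 0) != 0 \/ v (inord 1) != 0) /\
  (v (inord 2) != 0 \/ v (inord 3) != 0) /\
  (v (inord 4) != 0 \/ v (inord 5) != 0).

(* Singular point of the hypersurface {F = 0} in P^1 x P^1 x P^1
   (Jacobian criterion): F and all its partial derivatives vanish. *)
Definition singular_point (F : {mpoly CC[6]}) (v : 'I_6 -> CC) : Prop :=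
  proj_point v /\ F.@[v] = 0 /\ (forall i : 'I_6, (mderiv i F).@[v] = 0).

Definition smooth_hypersurface (F : {mpoly CC[6]}) : Prop :=
  ~ (exists v : 'I_6 -> CC, singular_point F v).

(* Main.v *)
Require Import Defs.
From HB Require Import structures.
From mathcomp Require Import all_boot all_order all_algebra.
From mathcomp Require Import mpoly complex Rstruct.
From mathcomp Require Import ring lra.
Import GRing.Theory Num.Theory.
Local Open Scope ring_scope.

Lemma mderivXU (i j : 'I_6) : mderiv i ('X_j : {mpoly CC[6]}) = if i == j then 1 else 0.
Proof.
rewrite mderivX mnm1E; case: eqP => [->|ne].
  rewrite eqxx scale1r.
  have -> : (U_(i) - U_(i) = 0)%MM by apply/mnmP => k; rewrite mnmBE subnn mnm0E.
  by rewrite mpolyX0.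
by case: eqP => // E; [case: ne; rewrite E | rewrite scale0r].
Qed.

Lemma meval_dX (v : 'I_6 -> CC) (i j : 'I_6) :
  (mderiv i ('X_j : {mpoly CC[6]})).@[v] = if i == j then 1 else 0.
Proof. by rewrite mderivXU; case: ifP; rewrite ?meval1 ?meval0. Qed.

Lemma inord_eqE (i j : nat) : (i < 6)%N -> (j < 6)%N ->
  (inord i == inord j :> 'I_6) = (i == j).
Proof.
move=> hi hj; apply/eqP/eqP => [E|->//].
by rewrite -(@inordK 5 i) // -(@inordK 5 j) // E.
Qed.

Ltac redif := repeat match goal with |- context [if (?x == ?y)%N then _ else _] =>
   let e := eval vm_compute in (x == y)%N in rewrite (_ : (x == y)%N = e); [|reflexivity] end.

Inductive ex := Var of nat | Cst of CC | Add of ex & ex | Mul of ex & ex.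

Fixpoint interp (e : ex) : {mpoly CC[6]} :=
  match e with
  | Var n => 'X_(inord n)
  | Cst c => c%:MP
  | Add e1 e2 => interp e1 + interp e2
  | Mul e1 e2 => interp e1 * interp e2
  end.

Fixpoint evalE (v : 'I_6 -> CC) (e : ex) : CC :=
  match e with
  | Var n => v (inord n)
  | Cst c => c
  | Add e1 e2 => evalE v e1 + evalE v e2
  | Mul e1 e2 => evalE v e1 * evalE v e2
  end.

Fixpoint deval (v : 'I_6 -> CC) (k : nat) (e : ex) : CC :=
  match e with
  | Var n => if Nat.eqb k n then 1 else 0
  | Cst c => 0
  | Add e1 e2 => deval v k e1 + deval v k e2
  | Mul e1 e2 => deval v k e1 * evalE v e2 + evalE v e1 * deval v k e2
  end.

Fixpoint wf (e : ex) : bool :=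
  match e with
  | Var n => (n < 6)%N
  | Cst c => true
  | Add e1 e2 => wf e1 && wf e2
  | Mul e1 e2 => wf e1 && wf e2
  end.

Lemma evalE_ok v e : (interp e).@[v] = evalE v e.
Proof.
elim: e => [n|c|e1 IH1 e2 IH2|e1 IH1 e2 IH2] /=.
- exact: mevalXU.
- exact: mevalC.
- by rewrite mevalD IH1 IH2.
- by rewrite mevalM IH1 IH2.
Qed.

Lemma deval_ok v k e : (k < 6)%N -> wf e -> (mderiv (inord k) (interp e)).@[v] = deval v k e.
Proof.
move=> hk; elim: e => [n|c|e1 IH1 e2 IH2|e1 IH1 e2 IH2] /=.
- by move=> hn; rewrite meval_dX inord_eqE.
- by move=> _; rewrite mderivC meval0.
- by case/andP=> h1 h2; rewrite mderivD mevalD IH1 // IH2.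
- by case/andP=> h1 h2; rewrite mderivM mevalD !mevalM !evalE_ok IH1 // IH2.
Qed.

Definition eQ (c : CC) : ex :=
  Add (Add (Mul (Mul (Var 0) (Var 0)) (Mul (Var 3) (Var 3)))
           (Mul (Mul (Mul (Mul (Cst c) (Var 0)) (Var 1)) (Var 2)) (Var 3)))
      (Mul (Mul (Var 1) (Var 1)) (Mul (Var 2) (Var 2))).

Definition eF (a b : CC) : ex :=
  Add (Add (Mul (eQ a) (Mul (Var 4) (Var 4)))
           (Mul (Mul (Add (Mul (Mul (Var 0) (Var 0)) (Mul (Var 2) (Var 2)))
                          (Mul (Mul (Var 1) (Var 1)) (Mul (Var 3) (Var 3)))) (Var 4)) (Var 5)))
      (Mul (eQ b) (Mul (Var 5) (Var 5))).

Lemma Fab_eF a b : Fab a b = interp (eF a b).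
Proof. rewrite /Fab /Qc /vx0 /vx1 /vy0 /vy1 /vz0 /vz1 !expr2. reflexivity. Qed.

Definition G1 (a b x0 x1 y0 y1 z0 z1 : CC) :=
  2*x0*(y1^+2*(z0^+2+z1^+2) + y0^+2*(z0*z1)) + x1*y0*y1*(a*z0^+2+b*z1^+2).
Definition G2 (a b x0 x1 y0 y1 z0 z1 : CC) :=
  2*x1*(y0^+2*(z0^+2+z1^+2) + y1^+2*(z0*z1)) + x0*y0*y1*(a*z0^+2+b*z1^+2).
Definition G3 (a b x0 x1 y0 y1 z0 z1 : CC) :=
  2*y0*(x1^+2*(z0^+2+z1^+2) + x0^+2*(z0*z1)) + x0*x1*y1*(a*z0^+2+b*z1^+2).
Definition G4 (a b x0 x1 y0 y1 z0 z1 : CC) :=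
  2*y1*(x0^+2*(z0^+2+z1^+2) + x1^+2*(z0*z1)) + x0*x1*y0*(a*z0^+2+b*z1^+2).
Definition G5 (a b x0 x1 y0 y1 z0 z1 : CC) :=
  2*(x0^+2*y1^+2 + a*x0*x1*y0*y1 + x1^+2*y0^+2)*z0 + (x0^+2*y0^+2 + x1^+2*y1^+2)*z1.
Definition G6 (a b x0 x1 y0 y1 z0 z1 : CC) :=
  (x0^+2*y0^+2 + x1^+2*y1^+2)*z0 + 2*(x0^+2*y1^+2 + b*x0*x1*y0*y1 + x1^+2*y0^+2)*z1.

Definition Sing a b x0 x1 y0 y1 z0 z1 : Prop :=
  G1 a b x0 x1 y0 y1 z0 z1 = 0 /\ G2 a b x0 x1 y0 y1 z0 z1 = 0 /\
  G3 a b x0 x1 y0 y1 z0 z1 = 0 /\ G4 a b x0 x1 y0 y1 z0 z1 = 0 /\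
  G5 a b x0 x1 y0 y1 z0 z1 = 0 /\ G6 a b x0 x1 y0 y1 z0 z1 = 0.

Ltac dtac := rewrite Fab_eF deval_ok //; cbn [deval evalE eF eQ Nat.eqb];
  rewrite /G1 /G2 /G3 /G4 /G5 /G6; ring.

Section V.
Variables (a b : CC) (v : 'I_6 -> CC).
Local Notation x0 := (v (inord 0)).
Local Notation x1 := (v (inord 1)).
Local Notation y0 := (v (inord 2)).
Local Notation y1 := (v (inord 3)).
Local Notation z0 := (v (inord 4)).
Local Notation z1 := (v (inord 5)).
Lemma dF0 : (mderiv (inord 0) (Fab a b)).@[v] = G1 a b x0 x1 y0 y1 z0 z1. Proof. dtac. Qed.
Lemma dF1 : (mderiv (inord 1) (Fab a b)).@[v] = G2 a b x0 x1 y0 y1 z0 z1. Proof. dtac. Qed.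
Lemma dF2 : (mderiv (inord 2) (Fab a b)).@[v] = G3 a b x0 x1 y0 y1 z0 z1. Proof. dtac. Qed.
Lemma dF3 : (mderiv (inord 3) (Fab a b)).@[v] = G4 a b x0 x1 y0 y1 z0 z1. Proof. dtac. Qed.
Lemma dF4 : (mderiv (inord 4) (Fab a b)).@[v] = G5 a b x0 x1 y0 y1 z0 z1. Proof. dtac. Qed.
Lemma dF5 : (mderiv (inord 5) (Fab a b)).@[v] = G6 a b x0 x1 y0 y1 z0 z1. Proof. dtac. Qed.
Lemma eFv : (Fab a b).@[v] * 2 = z0 * G5 a b x0 x1 y0 y1 z0 z1 + z1 * G6 a b x0 x1 y0 y1 z0 z1.
Proof. rewrite Fab_eF evalE_ok; cbn [evalE eF eQ]; rewrite /G5 /G6; ring. Qed.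

Lemma sing_iff : singular_point (Fab a b) v <->
  proj_point v /\ Sing a b x0 x1 y0 y1 z0 z1.
Proof.
split.
- case=> hp [_ hd]; split=> //.
  by rewrite /Sing -dF0 -dF1 -dF2 -dF3 -dF4 -dF5 !hd.
- case=> hp [h1 [h2 [h3 [h4 [h5 h6]]]]]; split=> //; split.
  + have : (Fab a b).@[v] * 2 = 0 by rewrite eFv h5 h6 !mulr0 addr0.
    by move/eqP; rewrite mulf_eq0 pnatr_eq0 orbF => /eqP.
  + move=> i.
    have -> : i = inord (val i) by rewrite inord_val.
    case: i => [[|[|[|[|[|[|n]]]]]] hn] /=.
    * by rewrite dF0.
    * by rewrite dF1.
    * by rewrite dF2.
    * by rewrite dF3.
    * by rewrite dF4.
    * by rewrite dF5.
    * by [].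
Qed.
End V.

Set Implicit Arguments.
Unset Strict Implicit.
Ltac gunf := rewrite /G1 /G2 /G3 /G4 /G5 /G6.

Lemma Sing_swapxy a b x0 x1 y0 y1 z0 z1 :
  Sing a b x0 x1 y0 y1 z0 z1 -> Sing a b y0 y1 x0 x1 z0 z1.
Proof.
move=> [h1 [h2 [h3 [h4 [h5 h6]]]]]; move: h1 h2 h3 h4 h5 h6; gunf => h1 h2 h3 h4 h5 h6; rewrite /Sing; gunf.
split; [rewrite -h3; ring|split; [rewrite -h4; ring|split; [rewrite -h1; ring|split;
 [rewrite -h2; ring|split; [rewrite -h5; ring|rewrite -h6; ring]]]]].
Qed.

Lemma Sing_swap01 a b x0 x1 y0 y1 z0 z1 :
  Sing a b x0 x1 y0 y1 z0 z1 -> Sing a b x1 x0 y1 y0 z0 z1.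
Proof.
move=> [h1 [h2 [h3 [h4 [h5 h6]]]]]; move: h1 h2 h3 h4 h5 h6; gunf => h1 h2 h3 h4 h5 h6; rewrite /Sing; gunf.
split; [rewrite -h2; ring|split; [rewrite -h1; ring|split; [rewrite -h4; ring|split;
 [rewrite -h3; ring|split; [rewrite -h5; ring|rewrite -h6; ring]]]]].
Qed.

Lemma Sing_swapz a b x0 x1 y0 y1 z0 z1 :
  Sing a b x0 x1 y0 y1 z0 z1 -> Sing b a x0 x1 y0 y1 z1 z0.
Proof.
move=> [h1 [h2 [h3 [h4 [h5 h6]]]]]; move: h1 h2 h3 h4 h5 h6; gunf => h1 h2 h3 h4 h5 h6; rewrite /Sing; gunf.
split; [rewrite -h1; ring|split; [rewrite -h2; ring|split; [rewrite -h3; ring|split;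
 [rewrite -h4; ring|split; [rewrite -h6; ring|rewrite -h5; ring]]]]].
Qed.

Lemma Sing_neg a b x0 x1 y0 y1 z0 z1 :
  Sing a b x0 x1 y0 y1 z0 z1 -> Sing (-a) (-b) x0 (-x1) y0 y1 z0 z1.
Proof.
move=> [h1 [h2 [h3 [h4 [h5 h6]]]]]; move: h1 h2 h3 h4 h5 h6; gunf => h1 h2 h3 h4 h5 h6; rewrite /Sing; gunf.
split; [rewrite -h1; ring|split; [rewrite -[RHS]oppr0 -h2; ring|split; [rewrite -h3; ring|split;
 [rewrite -h4; ring|split; [rewrite -h5; ring|rewrite -h6; ring]]]]].
Qed.

Lemma nz2 : (2 : CC) != 0.
Proof. by rewrite pnatr_eq0. Qed.

Lemma cancel_nz (c X : CC) : c != 0 -> c * X = 0 -> X = 0.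
Proof. by move=> hc /eqP; rewrite mulf_eq0 (negbTE hc) => /eqP. Qed.

Ltac nzt := by rewrite ?mulf_neq0 ?expf_neq0 ?nz2.
Ltac fside := repeat (apply/andP; split); try assumption; try nzt.

Lemma sq0 (z : CC) : z ^+ 2 = 0 -> z = 0.
Proof. by move/eqP; rewrite expf_eq0 /= => /eqP. Qed.

Lemma x0_nz a b x0 x1 y0 y1 z0 z1 :
  (x0 != 0 \/ x1 != 0) -> (y0 != 0 \/ y1 != 0) -> (z0 != 0 \/ z1 != 0) ->
  Sing a b x0 x1 y0 y1 z0 z1 -> x0 != 0.
Proof.
move=> hx hy hz [h1 [h2 [h3 [h4 [h5 h6]]]]]; move: h1 h2 h3 h4 h5 h6; gunf => h1 h2 h3 h4 h5 h6.
apply/negP => /eqP E; subst x0.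
have hx1 : x1 != 0 by case: hx; rewrite ?eqxx.
have e3 : y0 * (z0^+2 + z1^+2) = 0.
  apply: (@cancel_nz (2*x1^+2)); first nzt. by rewrite -h3; ring.
have e4 : y1 * (z0 * z1) = 0.
  apply: (@cancel_nz (2*x1^+2)); first nzt. by rewrite -h4; ring.
have e5 : 2*y0^+2*z0 + y1^+2*z1 = 0.
  apply: (@cancel_nz (x1^+2)); first nzt. by rewrite -h5; ring.
have e6 : y1^+2*z0 + 2*y0^+2*z1 = 0.
  apply: (@cancel_nz (x1^+2)); first nzt. by rewrite -h6; ring.
have [hy0|hy0] := eqVneq y0 0.
  subst y0. have hy1 : y1 != 0 by case: hy; rewrite ?eqxx.
  have hz1 : z1 = 0.
    apply: (@cancel_nz (y1^+2)); first nzt. by rewrite -e5; ring.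
  have hz0 : z0 = 0.
    apply: (@cancel_nz (y1^+2)); first nzt. by rewrite -e6; ring.
  by case: hz; rewrite ?hz0 ?hz1 eqxx.
have hP : z0^+2 + z1^+2 = 0 by apply: (@cancel_nz y0).
have [hy1|hy1] := eqVneq y1 0.
  subst y1.
  have hz0 : z0 = 0.
    apply: (@cancel_nz (2*y0^+2)); first nzt. by rewrite -e5; ring.
  have hz1 : z1 = 0.
    apply: (@cancel_nz (2*y0^+2)); first nzt. by rewrite -e6; ring.
  by case: hz; rewrite ?hz0 ?hz1 eqxx.
have /eqP : z0 * z1 = 0 by apply: (@cancel_nz y1).
rewrite mulf_eq0 => /orP [/eqP hz0|/eqP hz1].
  have hz1 : z1 = 0 by apply: sq0; rewrite -hP hz0; ring.
  by case: hz; rewrite ?hz0 ?hz1 eqxx.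
have hz0 : z0 = 0 by apply: sq0; rewrite -hP hz1; ring.
by case: hz; rewrite ?hz0 ?hz1 eqxx.
Qed.

Lemma zc1 (c1 : CC) {X G1 : CC} : G1 = 0 -> X = c1*G1 -> X = 0.
Proof. by move=> -> ->; rewrite mulr0. Qed.
Lemma zc2 (c1 c2 : CC) {X G1 G2 : CC} : G1 = 0 -> G2 = 0 -> X = c1*G1 + c2*G2 -> X = 0.
Proof. by move=> -> -> ->; rewrite !mulr0 addr0. Qed.
Lemma zc3 (c1 c2 c3 : CC) {X G1 G2 G3 : CC} : G1 = 0 -> G2 = 0 -> G3 = 0 ->
  X = c1*G1 + c2*G2 + c3*G3 -> X = 0.
Proof. by move=> -> -> -> ->; rewrite !mulr0 !addr0. Qed.
Lemma zc4 (c1 c2 c3 c4 : CC) {X G1 G2 G3 G4 : CC} : G1 = 0 -> G2 = 0 -> G3 = 0 -> G4 = 0 ->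
  X = c1*G1 + c2*G2 + c3*G3 + c4*G4 -> X = 0.
Proof. by move=> -> -> -> -> ->; rewrite !mulr0 !addr0. Qed.

Arguments zc1 c1 {X G1}.
Arguments zc2 c1 c2 {X G1 G2}.
Arguments zc3 c1 c2 c3 {X G1 G2 G3}.
Arguments zc4 c1 c2 c3 c4 {X G1 G2 G3 G4}.

Lemma z0_case a b x0 x1 y0 y1 z1 : x0 != 0 -> y0 != 0 -> y1 != 0 -> z1 != 0 ->
  Sing a b x0 x1 y0 y1 0 z1 -> b^+2 - 4 = 0.
Proof.
move=> h0 hy0 hy1 hz [h1 [h2 _]]; move: h1 h2; gunf => h1 h2.
apply: (@cancel_nz ((x0*y1)*(y0*y1*z1^+2))); first nzt.
apply: (zc2 (b*y1) (-2*y0) h2 h1); ring.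
Qed.

Lemma dehom a b x0 x1 y0 y1 z0 z1 : x0 != 0 -> y0 != 0 -> z0 != 0 ->
  Sing a b x0 x1 y0 y1 z0 z1 -> Sing a b 1 (x1/x0) 1 (y1/y0) 1 (z1/z0).
Proof.
move=> hx hy hz [h1 [h2 [h3 [h4 [h5 h6]]]]]; move: h1 h2 h3 h4 h5 h6; gunf => h1 h2 h3 h4 h5 h6; rewrite /Sing; gunf.
split; [apply: (zc1 (x0*y0^+2*z0^+2)^-1 h1); field; fside|].
split; [apply: (zc1 (x0*y0^+2*z0^+2)^-1 h2); field; fside|].
split; [apply: (zc1 (x0^+2*y0*z0^+2)^-1 h3); field; fside|].
split; [apply: (zc1 (x0^+2*y0*z0^+2)^-1 h4); field; fside|].
split; [apply: (zc1 (x0^+2*y0^+2*z0)^-1 h5); field; fside|].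
apply: (zc1 (x0^+2*y0^+2*z0)^-1 h6); field; fside.
Qed.


Lemma affP a b X Y Z : X != 0 -> Y != 0 -> Z != 0 -> 1 + Z^+2 = 0 ->
  Sing a b 1 X 1 Y 1 Z -> (a-b)^+2 + 4 = 0.
Proof.
move=> hX hY hZ hP [h1 [h2 _]]; move: h1 h2; gunf => h1 h2.
have hK : 2*X*Y*Z + (a + b*Z^+2) = 0.
  apply: (@cancel_nz Y) => //. apply: (zc2 1 (-2*X) h2 hP); ring.
have hm : (X*Y)^+2 - 1 = 0.
  apply: (@cancel_nz (-2*Z)); first by rewrite mulf_neq0 // oppr_eq0 nz2.
  apply: (zc3 1 (-2*Y^+2) (-(X*Y)) h1 hP hK); ring.
apply: (zc3 (a + b*Z^+2 - 2*(X*Y)*Z) (4*Z^+2) (4 - 2*(a+b*Z^+2)*b + b^+2*(1+Z^+2)) hK hm hP).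
ring.
Qed.

Lemma affYX a b X Z : X != 0 -> Z != 0 ->
  Sing a b 1 X 1 X 1 Z -> a*b + 2*a + 2*b + 3 = 0.
Proof.
move=> hX hZ [h1 [h2 [_ [_ [h5 h6]]]]]; move: h1 h2 h5 h6; gunf => h1 h2 h5 h6.
have hh2 : 2*(1+Z^+2) + 2*X^+2*Z + (a + b*Z^+2) = 0.
  apply: (@cancel_nz X) => //. apply: (zc1 1 h2); ring.
have hT : (X^+2)^+2 - 1 = 0.
  apply: (@cancel_nz (-2*Z)); first by rewrite mulf_neq0 // oppr_eq0 nz2.
  apply: (zc2 1 (-X^+2) h1 hh2); ring.
have hh5 : Z + X^+2*(2+a) = 0.
  apply: (@cancel_nz 2); first exact: nz2.
  apply: (zc2 1 (-Z) h5 hT); ring.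
apply: (@cancel_nz 2); first exact: nz2.
apply: (zc3 (-1) (1 - 2*(2+a)*(2+b)) (2*X^+2*(2+b)) h6 hT hh5); ring.
Qed.

Lemma aff a b X Y Z : X != 0 -> Y != 0 -> Z != 0 -> Sing a b 1 X 1 Y 1 Z ->
  (a-b)^+2 + 4 = 0 \/ a*b + 2*a + 2*b + 3 = 0 \/ a*b - 2*a - 2*b + 3 = 0.
Proof.
move=> hX hY hZ hs.
have hd : 2*(1+Z^+2)*((Y-X)*(Y+X)) = 0.
  case: hs => [h1 [_ [h3 _]]]; move: h1 h3; gunf => h1 h3.
  apply: (zc2 1 (-1) h1 h3); ring.
move/eqP: hd; rewrite !mulf_eq0 (negbTE nz2) /= => /orP [/eqP hP|/orP [|]].
- by left; exact: (affP hX hY hZ hP hs).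
- rewrite subr_eq0 => /eqP E; subst Y.
  by right; left; exact: (affYX hX hZ hs).
- rewrite addr_eq0 => /eqP E; subst Y.
  have H := affYX hY hZ (@Sing_neg _ _ _ _ _ _ _ _ hs).
  by right; right; rewrite -H; ring.
Qed.

Definition prodab (a b : CC) := (a ^+ 2 - 4) * (b ^+ 2 - 4) * (a * b - 2 * b - 2 * a + 3)
    * (a * b + 2 * b + 2 * a + 3) * (b ^+ 2 - 2 * a * b + a ^+ 2 + 4).

Lemma sing_prod a b x0 x1 y0 y1 z0 z1 :
  (x0 != 0 \/ x1 != 0) -> (y0 != 0 \/ y1 != 0) -> (z0 != 0 \/ z1 != 0) ->
  Sing a b x0 x1 y0 y1 z0 z1 -> prodab a b = 0.
Proof.
move=> hx hy hz hs.
have hx0 := x0_nz hx hy hz hs.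
have hy0 := x0_nz hy hx hz (Sing_swapxy hs).
have hx1 := x0_nz ((or_comm _ _).1 hx) ((or_comm _ _).1 hy) hz (Sing_swap01 hs).
have hy1 := x0_nz ((or_comm _ _).1 hy) ((or_comm _ _).1 hx) hz (Sing_swapxy (Sing_swap01 hs)).
rewrite /prodab.
have [hz0|hz0] := eqVneq z0 0.
  subst z0. have hz1 : z1 != 0 by case: hz; rewrite ?eqxx.
  have H := z0_case hx0 hy0 hy1 hz1 hs.
  by rewrite H; ring.
have [hz1|hz1] := eqVneq z1 0.
  subst z1.
  have H := z0_case hx0 hy0 hy1 hz0 (Sing_swapz hs).
  by rewrite H; ring.
have hs' := dehom hx0 hy0 hz0 hs.
have nzd : forall u w : CC, u != 0 -> w != 0 -> u / w != 0.
  by move=> u w hu hw; rewrite mulf_neq0 ?invr_eq0.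
case: (aff (nzd _ _ hx1 hx0) (nzd _ _ hy1 hy0) (nzd _ _ hz1 hz0) hs') => [H|[H|H]].
- rewrite (_ : b ^+ 2 - 2 * a * b + a ^+ 2 + 4 = (a-b)^+2 + 4); last ring.
  by rewrite H; ring.
- rewrite (_ : a * b + 2 * b + 2 * a + 3 = a*b + 2*a + 2*b + 3); last ring.
  by rewrite H; ring.
- rewrite (_ : a * b - 2 * b - 2 * a + 3 = a*b - 2*a - 2*b + 3); last ring.
  by rewrite H; ring.
Qed.

Definition mkv (x0 x1 y0 y1 z0 z1 : CC) : 'I_6 -> CC :=
  fun i => nth 0 [:: x0; x1; y0; y1; z0; z1] i.

Lemma wit a b x0 x1 y0 y1 z0 z1 :
  (x0 != 0 \/ x1 != 0) -> (y0 != 0 \/ y1 != 0) -> (z0 != 0 \/ z1 != 0) ->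
  Sing a b x0 x1 y0 y1 z0 z1 -> ~ smooth_hypersurface (Fab a b).
Proof.
move=> hx hy hz hs; apply; exists (mkv x0 x1 y0 y1 z0 z1).
apply/sing_iff; rewrite /proj_point /mkv !inordK //.
Qed.

Lemma W1 a b : b^+2 - 4 = 0 -> exists X Y, X != 0 /\ Sing a b 1 X 1 Y 0 1.
Proof.
move=> hb.
set X := sqrtC ('i : CC).
have hX : X^+4 + 1 = 0.
  by rewrite (_ : X^+4 = (X^+2)^+2); [rewrite sqrtCK sqrCi; ring | ring].
have nX : X != 0.
  apply/eqP => E; move: hX; rewrite E expr0n /= add0r => /eqP; rewrite oner_eq0.
  done.
exists X, (-(b*X)/2); split => //; rewrite /Sing; gunf.
split; [apply: (zc1 0 hb); field; fside|].
split; [apply: (zc1 (-X/2) hb); field; fside|].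
split; [apply: (zc1 (-X^+2/2) hb); field; fside|].
split; [apply: (zc1 0 hb); field; fside|].
split; [apply: (zc2 (X^+4/4) 1 hb hX); field; fside|].
apply: (zc1 (-X^+2/2) hb); field; fside.
Qed.

Lemma W3 a b : (a-b)^+2 + 4 = 0 -> exists X Y Z : CC, Sing a b 1 X 1 Y 1 Z.
Proof.
move=> hab.
set c := (a+b)/2.
set s := sqrtC (c^+2 - 4).
set r := (-c + s)/2.
have hs : s^+2 - (c^+2 - 4) = 0 by rewrite sqrtCK subrr.
have hr : r^+2 + c*r + 1 = 0.
  apply: (zc1 (1/4) hs); rewrite /r; field; fside.
set X := sqrtC r.
have hX : X^+2 = r by rewrite sqrtCK.
have hq : X^+4 + c*X^+2 + 1 = 0.
  by rewrite -hr -hX; ring.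
have nX : X != 0.
  apply/eqP => E; have : (1:CC) = 0 by rewrite -hq E; ring.
  by move/eqP; rewrite oner_eq0.
exists X, X^-1, (-(a-b)/2); rewrite /Sing; gunf.
split; [apply: (zc1 (X^-2/2 + b/4) hab); field; fside|].
split; [apply: (zc1 (X/2 + b*X^-1/4) hab); field; fside|].
split; [apply: (zc1 (X^+2/2 + b/4) hab); field; fside|].
split; [apply: (zc1 (X^-1/2 + b*X/4) hab); field; fside|].
split; [apply: (zc1 (2*X^-2) hq); rewrite /c; field; fside|].
apply: (zc2 (2*(-(a-b)/2)*X^-2) (1/2) hq hab); rewrite /c; field; fside.
Qed.

Lemma W4 a b : a*b + 2*a + 2*b + 3 = 0 -> Sing a b 1 1 1 1 1 (-(2+a)).
Proof.
move=> h; rewrite /Sing; gunf.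
split; [apply: (zc1 (2+a) h); ring|].
split; [apply: (zc1 (2+a) h); ring|].
split; [apply: (zc1 (2+a) h); ring|].
split; [apply: (zc1 (2+a) h); ring|].
split; [apply: (zc1 0 h); ring|].
apply: (zc1 (-2) h); ring.
Qed.

Lemma W5 a b : a*b - 2*a - 2*b + 3 = 0 -> Sing a b 1 (-1) 1 1 1 (-(2-a)).
Proof.
move=> h.
have h' : (-a)*(-b) + 2*(-a) + 2*(-b) + 3 = 0 by rewrite -h; ring.
have := Sing_neg (W4 h'); rewrite !opprK.
by rewrite (_ : 2 + - a = 2 - a).
Qed.

Theorem proposition4p1 (a b : CC) :
  smooth_hypersurface (Fab a b) <->
  (a ^+ 2 - 4) * (b ^+ 2 - 4) * (a * b - 2 * b - 2 * a + 3)
    * (a * b + 2 * b + 2 * a + 3) * (b ^+ 2 - 2 * a * b + a ^+ 2 + 4) != 0.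
Proof.
have o1 : (1:CC) != 0 by rewrite oner_eq0.
split.
- move=> hs; apply/eqP => H; move/eqP: H.
  rewrite !mulf_eq0 => /orP [/orP [/orP [/orP [h|h]|h]|h]|h]; move/eqP: h => h.
  + have [X [Y [nX S]]] := W1 b h.
    apply: (wit _ _ _ (Sing_swapz S) hs); [by left|by left|by left].
  + have [X [Y [nX S]]] := W1 a h.
    apply: (wit _ _ _ S hs); [by left|by left|by right].
  + have h' : a*b - 2*a - 2*b + 3 = 0 by rewrite -h; ring.
    apply: (wit _ _ _ (W5 h') hs); by left.
  + have h' : a*b + 2*a + 2*b + 3 = 0 by rewrite -h; ring.
    apply: (wit _ _ _ (W4 h') hs); by left.
  + have h' : (a-b)^+2 + 4 = 0 by rewrite -h; ring.
    have [X [Y [Z S]]] := W3 h'.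
    apply: (wit _ _ _ S hs); by left.
- move=> hp [v hv]; move: hp; apply/negP; rewrite negbK.
  move/sing_iff: hv => [[hx [hy hz]] hs].
  by apply/eqP; exact: (sing_prod hx hy hz hs).
Qed.
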